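(* Let $\mathbf{x}_1,\dots,\mathbf{x}_m\in\mathbb{R}^n$ and $y_1,\dots,y_m\in\mathbb{R}$ be such that $y_i=\phi(\mathbf{x}_i)$, $i=1,\dots,m$, for some function $\phi:\mathbb{R}^n\to\mathbb{R}$. Then for every $\varepsilon>0$ there exists a $\mathrm{DLSE}_T$ neural network whose input-output function $d_T$ satisfies $|d_T(\mathbf{x}_i)-y_i|\leqslant\varepsilon$ for $i=1,\dots,m$.
   Context: A $\mathrm{DLSE}_T$ neural network (with temperature $T>0$, $n$ inputs and $K$ hidden nodes in each of its two components, $K$ a positive integer) is specified by vectors $\boldsymbol{\alpha}^{(k)},\boldsymbol{\gamma}^{(k)}\in\mathbb{R}^n$ and reals $\beta_k,\delta_k$, $k=1,\dots,K$, and its input-output function is $$d_T(\mathbf{x})=T\log\Big(\sum_{k=1}^K\exp\big((\langle\boldsymbol{\alpha}^{(k)},\mathbf{x}\rangle+\beta_k)/T\big)\Big)-T\log\Big(\sum_{k=1}^K\exp\big((\langle\boldsymbol{\gamma}^{(k)},\mathbf{x}\rangle+\delta_k)/T\big)\Big),$$ i.e., the difference of two one-hidden-layer networks with hidden activation $s\mapsto\exp(s/T)$, unit weights to the output node, and output activation $s\mapsto T\log s$. *)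

(* Defs.v *)
From HB Require Import structures.
From mathcomp Require Import all_boot all_order all_algebra.
From mathcomp Require Import all_classical all_reals all_analysis.
Set Implicit Arguments. Unset Strict Implicit. Unset Printing Implicit Defensive.
Import Order.TTheory GRing.Theory Num.Theory.
Local Open Scope ring_scope.

Definition dotv (R : realType) (n : nat) (u v : 'rV[R]_n) : R :=
  \sum_(j < n) u 0 j * v 0 j.

Definition dlse (R : realType) (n K : nat) (T : R)
    (alpha gamma : 'I_K -> 'rV[R]_n) (beta delta : 'I_K -> R)
    (x : 'rV[R]_n) : R :=
  T * ln (\sum_(k < K) expR ((dotv (alpha k) x + beta k) / T))
  - T * ln (\sum_(k < K) expR ((dotv (gamma k) x + delta k) / T)).

(* Main.v *)
Require Import Defs.
From HB Require Import structures.
From mathcomp Require Import all_boot all_order all_algebra.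
From mathcomp Require Import all_classical all_reals all_analysis.
From mathcomp Require Import ring lra.
Import Order.TTheory GRing.Theory Num.Theory.
Import numFieldNormedType.Exports.
Local Open Scope classical_set_scope.
Local Open Scope ring_scope.

Lemma cvg_sumR (R : realType) (T : Type) (F : set_system T) (FF : Filter F)
  (J : Type) (r : seq J) (f : J -> T -> R) (l : J -> R) :
  (forall j, f j @ F --> l j) ->
  \sum_(j <- r) f j t @[t --> F] --> \sum_(j <- r) l j.
Proof.
move=> H; elim: r => [|a r IH].
  under eq_fun do rewrite big_nil; rewrite big_nil; exact: cvg_cst.
under eq_fun do rewrite big_cons; rewrite big_cons.
exact: cvgD.
Qed.

Lemma dot_key (R : realType) (n : nat) (L c : R) (a b : 'rV[R]_n) :
  dotv ((2 * L) *: a) b + (c - L * dotv a a) =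
  L * dotv b b + (c - L * \sum_(k < n) (b 0 k - a 0 k) ^+ 2).
Proof.
rewrite /dotv !mulr_sumr.
have E : \sum_(k < n) ((2 * L) *: a) 0 k * b 0 k =
  \sum_(k < n) (L * (b 0 k * b 0 k)) - \sum_(k < n) (L * (b 0 k - a 0 k)^+2)
  + \sum_(k < n) (L * (a 0 k * a 0 k)).
  by rewrite -sumrB -big_split; apply: eq_bigr => k _; rewrite mxE /=; ring.
rewrite E; ring.
Qed.

Lemma term_cvg (R : realType) (c D : R) : 0 <= D ->
  expR (c - L * D) @[L --> +oo] --> (if D == 0 then expR c else 0).
Proof.
move=> D0; case: eqP => [->|Dn0].
  under eq_fun do rewrite mulr0 subr0; exact: cvg_cst.
have Dp : 0 < D by rewrite lt_neqAle D0 andbT; apply/eqP => /esym.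
apply/cvgrPdist_le => e e0.
have HL := @nbhs_pinfty_ge R ((c - ln e) / D) (num_real _).
near=> L.
rewrite sub0r normrN ger0_norm ?expR_ge0//.
rewrite -[leRHS](@lnK R) ?posrE// ler_expR.
have : (c - ln e) / D <= L by near: L.
rewrite ler_pdivrMr//; lra.
Unshelve. all: end_near.
Qed.

Lemma main_cvg (R : realType) (n m : nat)
    (x : 'I_m -> 'rV[R]_n) (y : 'I_m -> R) (phi : 'rV[R]_n -> R)
    (hy : forall i, y i = phi (x i)) (i : 'I_m) :
  let D j := \sum_(k < n) (x i 0 k - x j 0 k) ^+ 2 in
  ln (\sum_j expR (y j - L * D j)) - ln (\sum_j expR (0 - L * D j))
    @[L --> +oo] --> y i.
Proof.
move=> D.
have D0 j : 0 <= D j by apply: sumr_ge0 => k _; apply: sqr_ge0.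
have Deq j : D j = 0 -> y j = y i.
  move=> /eqP; rewrite psumr_eq0; last by move=> k _; apply: sqr_ge0.
  move=> /allP H; rewrite !hy; congr phi; apply/rowP => k.
  have := H k (mem_index_enum _); rewrite sqrf_eq0 subr_eq0 => /eqP.
  by move=> ->.
set b := \sum_j (if D j == 0 then 1 else 0 : R).
have bpos : 0 < b.
  rewrite /b (bigD1 i)//= ifT; last first.
    by rewrite /D; apply/eqP; apply: big1 => k _; rewrite subrr expr0n.
  rewrite ltr_pwDl// sumr_ge0// => j _; by case: ifP.
have Hnum := @cvg_sumR R R _ _ _ (index_enum 'I_m) (fun j L => expR (y j - L * D j))
   (fun j => (if D j == 0 then expR (y j) else 0)) (fun j => @term_cvg R _ (D j) (D0 j)).
have Hden := @cvg_sumR R R _ _ _ (index_enum 'I_m) (fun j L => expR (0 - L * D j))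
   (fun j => (if D j == 0 then expR 0 else 0)) (fun j => @term_cvg R _ (D j) (D0 j)).
have Ea : \sum_(j <- index_enum 'I_m) (if D j == 0 then expR (y j) else 0)
    = expR (y i) * b.
  rewrite /b mulr_sumr; apply: eq_bigr => j _.
  by case: eqP => [/Deq ->|_]; rewrite ?mulr1 ?mulr0.
have Eb : \sum_(j <- index_enum 'I_m) (if D j == 0 then expR 0 else 0) = b.
  by rewrite /b; apply: eq_bigr => j _; rewrite expR0.
rewrite Ea in Hnum; rewrite Eb in Hden.
have -> : y i = ln (expR (y i) * b) - ln b.
  by rewrite lnM ?posrE ?expR_gt0// expRK addrK.
have Pa : 0 < expR (y i) * b by rewrite mulr_gt0// expR_gt0.
have H1 := @continuous_cvg _ _ _ _ (@proper_pinfty_nbhs R) _ _ _ (continuous_ln Pa) (Hnum (@proper_pinfty_nbhs R)).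
have H2 := @continuous_cvg _ _ _ _ (@proper_pinfty_nbhs R) _ _ _ (continuous_ln bpos) (Hden (@proper_pinfty_nbhs R)).
exact: (cvgB H1 H2).
Qed.

Theorem theorem4 (R : realType) (n m : nat)
    (x : 'I_m -> 'rV[R]_n) (y : 'I_m -> R) (phi : 'rV[R]_n -> R)
    (hy : forall i, y i = phi (x i)) (eps : R) (heps : 0 < eps) :
  exists (T : R) (K : nat), 0 < T /\ (0 < K)%N /\
    exists (alpha gamma : 'I_K -> 'rV[R]_n) (beta delta : 'I_K -> R),
      forall i : 'I_m, `| dlse T alpha gamma beta delta (x i) - y i | <= eps.
Proof.
case: (posnP m) => [m0|mpos].
  exists 1, 1%N; split => //; split => //.
  exists (fun _ => 0), (fun _ => 0), (fun _ => 0), (fun _ => 0).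
  by move=> i; have := ltn_ord i; move: (nat_of_ord i); rewrite m0.
pose D i j := \sum_(k < n) (x i 0 k - x j 0 k) ^+ 2.
have H : \forall L \near +oo, forall i,
    `|y i - (ln (\sum_j expR (y j - L * D i j))
             - ln (\sum_j expR (0 - L * D i j)))| <= eps.
  apply: filter_forall => i.
  by move/cvgrPdist_le: (@main_cvg R n m x y phi hy i) => /(_ eps heps).
have [L HL] := filter_ex H.
exists 1, m; split => //; split => //.
exists (fun j => (2 * L) *: x j), (fun j => (2 * L) *: x j).
exists (fun j => y j - L * dotv (x j) (x j)), (fun j => 0 - L * dotv (x j) (x j)).
move=> i; rewrite distrC.
have E c : \sum_j expR ((dotv ((2 * L) *: x j) (x i) + (c j - L * dotv (x j) (x j))) / 1)
   = expR (L * dotv (x i) (x i)) * \sum_j expR (c j - L * D i j).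
  rewrite mulr_sumr; apply: eq_bigr => j _.
  by rewrite divr1 dot_key expRD.
rewrite /dlse (E y) (E (fun=> 0)) !mul1r.
rewrite !lnM ?posrE ?expR_gt0 //; last 2 first.
- by rewrite (bigD1 (Ordinal mpos)) //= ltr_pwDl ?expR_gt0 ?sumr_ge0 // => j _; rewrite expR_ge0.
- by rewrite (bigD1 (Ordinal mpos)) //= ltr_pwDl ?expR_gt0 ?sumr_ge0 // => j _; rewrite expR_ge0.
have := HL i; congr (`|_| <= _); rewrite /D; ring.
Qed.
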